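(* Let $m,n\ge 3$. Let $K_m=U_{\{0,2\},m}(a,b,c)$, let $L_n=U_{\{1,3\},n}(b,a,c)$ if $n\ge 4$, and let $L_3=U_{\{1\},3}(b,a,c)$. Then the state complexities of $K_m^R\cup L_n^R$, $K_m^R\cap L_n^R$ and $K_m^R\setminus L_n^R$ are each $(2^m-1)(2^n-1)+1$, and the state complexity of $K_m^R\oplus L_n^R$ is $2^{m+n-1}$.
   Context: The state complexity of a regular language is the number of states of its minimal complete DFA. For $n\ge 3$, $\mathcal{U}_n(a,b,c)$ is the DFA over $\{a,b,c\}$ with states $\{0,\dots,n-1\}$, initial state $0$, where $a$ maps $i\mapsto i+1\pmod n$, $b$ swaps $0$ and $1$ fixing other states, and $c$ maps $n-1$ to $0$ fixing other states. $\mathcal{U}_n(b,a,c)$ is the same with the roles of $a$ and $b$ interchanged ($b$ is the cycle $i\mapsto i+1\pmod n$, $a$ swaps $0$ and $1$). For a set $F\subseteq\{0,\dots,n-1\}$, $U_{F,n}(a,b,c)$ (resp. $U_{F,n}(b,a,c)$) denotes the language accepted by $\mathcal{U}_n(a,b,c)$ (resp. $\mathcal{U}_n(b,a,c)$) with final state set $F$. $L^R$ is the reversal of $L$; $\setminus$ is set difference, $\oplus$ symmetric difference. *)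

(* Defs.v *)
From mathcomp Require Import all_boot.
Set Implicit Arguments. Unset Strict Implicit. Unset Printing Implicit Defensive.

Inductive letter := la | lb | lc.

Definition word := seq letter.
Definition lang := word -> Prop.

Definition rev_lang (L : lang) : lang := fun w => L (rev w).
Definition union_lang (L1 L2 : lang) : lang := fun w => L1 w \/ L2 w.
Definition inter_lang (L1 L2 : lang) : lang := fun w => L1 w /\ L2 w.
Definition diff_lang (L1 L2 : lang) : lang := fun w => L1 w /\ ~ L2 w.
Definition symdiff_lang (L1 L2 : lang) : lang :=
  fun w => (L1 w /\ ~ L2 w) \/ (L2 w /\ ~ L1 w).

Definition dfa_recognizes (k : nat) (d : 'I_k -> letter -> 'I_k) (s : 'I_k)
  (f : pred 'I_k) (L : lang) : Prop :=
  forall w : word, f (foldl d s w) <-> L w.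

Definition state_complexity (L : lang) (k : nat) : Prop :=
  (exists d s f, @dfa_recognizes k d s f L) /\
  (forall k' d s f, @dfa_recognizes k' d s f L -> k <= k').

Definition cyc (n i : nat) : nat := i.+1 %% n.
Definition swap01 (i : nat) : nat := if i == 0 then 1 else if i == 1 then 0 else i.
Definition reset (n i : nat) : nat := if i == n.-1 then 0 else i.

Definition U_abc_step (n : nat) (i : nat) (x : letter) : nat :=
  match x with la => cyc n i | lb => swap01 i | lc => reset n i end.
Definition U_bac_step (n : nat) (i : nat) (x : letter) : nat :=
  match x with la => swap01 i | lb => cyc n i | lc => reset n i end.

Definition U_abc (F : seq nat) (n : nat) : lang :=
  fun w => foldl (U_abc_step n) 0 w \in F.
Definition U_bac (F : seq nat) (n : nat) : lang :=
  fun w => foldl (U_bac_step n) 0 w \in F.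

Definition K_lang (m : nat) : lang := U_abc [:: 0; 2] m.
Definition L_lang (n : nat) : lang :=
  if 4 <= n then U_bac [:: 1; 3] n else U_bac [:: 1] n.

(* Main.v *)
Require Import Defs.
From mathcomp Require Import all_boot zify.
From Stdlib Require Import ClassicalEpsilon.

Set Implicit Arguments. Unset Strict Implicit. Unset Printing Implicit Defensive.

Definition agree (N : nat) (p q : nat -> bool) := forall i, i < N -> p i = q i.
Definition cnt (N : nat) (p : nat -> bool) := count p (iota 0 N).

Lemma mod_lt2 a N : N <= a -> a < N + N -> a %% N = a - N.
Proof. move=> h1 h2. rewrite -{1}(subnK h1) modnDr modn_small //. lia. Qed.

Lemma iter_cyc N k i : i < N -> iter k (cyc N) i = (i + k) %% N.
Proof.
move=> hi; elim: k => [|k IH]; first by rewrite addn0 modn_small.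
by rewrite iterS IH /cyc -addn1 modnDml addn1 addnS.
Qed.

Lemma swap01K i : swap01 (swap01 i) = i.
Proof. rewrite /swap01; case: i => [|[|i]] //. Qed.

Lemma iter_swap k i : iter k swap01 i = if odd k then swap01 i else i.
Proof.
elim: k => [|k IH] //=. rewrite IH. case: (odd k) => //=. by rewrite swap01K.
Qed.

Lemma swap01_lt N i : 2 <= N -> i < N -> swap01 i < N.
Proof. rewrite /swap01; case: i => [|[|i]] //=; lia. Qed.

Lemma cyc_lt N i : 0 < N -> cyc N i < N.
Proof. move=> h; exact: ltn_pmod. Qed.

Lemma reset_lt N i : i < N -> reset N i < N.
Proof. rewrite /reset; case: ifP => // _; lia. Qed.

Definition tr j i := if i == j then j.+1 else if i == j.+1 then j else i.

Lemma trK j i : tr j (tr j i) = i.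
Proof.
rewrite /tr; case: (eqVneq i j) => [->|h1] /=; first by rewrite (gtn_eqF (ltnSn j)) eqxx.
case: (eqVneq i j.+1) => [->|h2] /=; first by rewrite eqxx.
by rewrite (negbTE h1) (negbTE h2).
Qed.

Lemma tr_lt N j i : j.+1 < N -> i < N -> tr j i < N.
Proof. rewrite /tr => h hi; case: ifP => _; [lia|case: ifP => _; lia]. Qed.

Definition mu N (p : nat -> bool) := sumn (map (fun i => p i * i) (iota 0 N)).

Lemma iota_split N j : j.+1 < N -> iota 0 N = iota 0 j ++ j :: j.+1 :: iota j.+2 (N - j.+2).
Proof.
move=> h. have -> : N = j + (2 + (N - j.+2)) by lia.
rewrite iotaD /= add0n; congr (_ ++ _). rewrite add0n; congr [:: _, _ & iota _ _]; lia.
Qed.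

Section CanonSec.
Variable N : nat.

Lemma prefix_closed (p : nat -> bool) : (forall j, j.+1 < N -> p j.+1 -> p j) ->
  forall i j, j <= i -> i < N -> p i -> p j.
Proof.
move=> H i j; elim: i => [|i IH] hji hi pi.
  by have -> : j = 0 by lia.
case: (eqVneq j i.+1) => [->//|hne]. apply: IH; [lia|lia|]. apply: H => //.
Qed.

Lemma cnt_canon k : k <= N -> cnt N (fun i => i < k) = k.
Proof.
move=> hk. rewrite /cnt (_ : N = k + (N - k)); last by lia.
rewrite iotaD count_cat add0n.
rewrite (@eq_in_count _ _ predT); last by move=> i; rewrite mem_iota => /andP[_ h].
rewrite count_predT size_iota.
rewrite (@eq_in_count _ _ pred0); last first.
  move=> i; rewrite mem_iota => /andP[h _] /=. by apply/negbTE; rewrite -leqNgt.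
by rewrite count_pred0 addn0.
Qed.

Lemma nodesc_canon (p : nat -> bool) : (forall j, j.+1 < N -> p j.+1 -> p j) -> agree N p (fun i => i < cnt N p).
Proof.
move=> H. case: (boolP [forall i : 'I_N, p i]) => [/forallP Hall|].
  have Ec : cnt N p = N.
    rewrite /cnt (@eq_in_count _ _ predT) ?count_predT ?size_iota // => x.
    rewrite mem_iota => /andP[_ hx]; exact: (Hall (Ordinal hx)).
  move=> i hi. by rewrite Ec hi (Hall (Ordinal hi)).
rewrite negb_forall => /existsP [i0 hi0].
have ex : exists k, (k < N) && ~~ p k by exists i0; rewrite ltn_ord.
case: (ex_minnP ex) => k /andP[hk pk] kmin.
have E : agree N p (fun i => i < k).
  move=> i hi. case: (ltnP i k) => hik.
  - apply/negbNE/negP => npi. have := kmin i; rewrite hi npi => /(_ isT). lia.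
  - apply/negbTE/negP => pi. move/negP: pk; apply. exact: (prefix_closed H hik hi pi).
have Ec : cnt N p = k.
  rewrite /cnt (@eq_in_count _ _ (fun i => i < k)); first exact: cnt_canon (ltnW hk).
  move=> x; rewrite mem_iota => /andP[_ hx]; exact: E.
by rewrite Ec.
Qed.

Lemma desc_or_canon (p : nat -> bool) : (exists j, [/\ j.+1 < N, ~~ p j & p j.+1]) \/ agree N p (fun i => i < cnt N p).
Proof.
case: (boolP (has (fun j => (j.+1 < N) && ~~ p j && p j.+1) (iota 0 N))).
  move=> /hasP [j _ /andP[/andP[h1 h2] h3]]. left; by exists j.
move=> /hasPn H. right. apply: nodesc_canon => j hj pj.
have := H j; rewrite mem_iota /= add0n (ltnW hj) hj pj /= andbT => /(_ isT).
by move/negbNE.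
Qed.

End CanonSec.

Section OneD.
Variable N : nat.
Hypothesis hN : 2 <= N.
Variable T : (nat -> bool) -> Prop.
Hypothesis Text : forall p q, agree N p q -> T p -> T q.
Hypothesis Tcyc : forall p, T p -> T (fun i => p (cyc N i)).
Hypothesis Tswap : forall p, T p -> T (fun i => p (swap01 i)).

Lemma T_rot k p : T p -> T (fun i => p ((i + k) %% N)).
Proof.
elim: k p => [|k IH] p Tp.
  apply: Text Tp => i hi. by rewrite addn0 modn_small.
have := Tcyc (IH p Tp). apply: Text => i hi /=.
by rewrite /cyc modnDml addSnnS.
Qed.

Lemma tr_arith j i : j.+1 < N -> i < N ->
  (swap01 ((i + (N - j)) %% N) + j) %% N = tr j i.
Proof.
move=> hj hi; rewrite /tr.
case: (eqVneq i j) => [->|h1] /=.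
  rewrite (_ : j + (N - j) = N); last by lia.
  rewrite modnn /swap01 /= modn_small; lia.
case: (eqVneq i j.+1) => [->|h2] /=.
  rewrite (_ : j.+1 + (N - j) = 1 + N); last by lia.
  rewrite modnDr (modn_small (_ : 1 < N)) //= /swap01 /= add0n modn_small; lia.
case: (ltnP i j) => hij.
  rewrite (modn_small (_ : i + (N - j) < N)); last by lia.
  rewrite /swap01 (_ : (i + (N - j) == 0) = false); last by lia.
  rewrite (_ : (i + (N - j) == 1) = false); last by lia.
  rewrite (_ : i + (N - j) + j = i + N); last by lia.
  by rewrite modnDr modn_small.
rewrite (@mod_lt2 (i + (N - j))); [|lia|lia].
rewrite /swap01 (_ : (i + (N - j) - N == 0) = false); last by lia.
rewrite (_ : (i + (N - j) - N == 1) = false); last by lia.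
rewrite modn_small; lia.
Qed.

Lemma T_tr j p : j.+1 < N -> T p -> T (fun i => p (tr j i)).
Proof.
move=> hj Tp. have h3 := T_rot (N - j) (Tswap (T_rot j Tp)).
apply: Text h3 => i hi /=. by rewrite tr_arith.
Qed.

Lemma mu_tr j p : j.+1 < N -> ~~ p j -> p j.+1 -> (mu N (fun i => p (tr j i))).+1 = mu N p.
Proof.
move=> hj h1 h2. rewrite /mu (iota_split hj) !map_cat !sumn_cat /=.
have E1 : map (fun i => p (tr j i) * i) (iota 0 j) = map (fun i => p i * i) (iota 0 j).
  apply/eq_in_map => i; rewrite mem_iota => /andP[_ hi]; rewrite /tr.
  by rewrite (ltn_eqF hi) (ltn_eqF (ltn_trans hi (ltnSn j))).
have E2 : map (fun i => p (tr j i) * i) (iota j.+2 (N - j.+2)) = map (fun i => p i * i) (iota j.+2 (N - j.+2)).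
  apply/eq_in_map => i; rewrite mem_iota => /andP[hi _]; rewrite /tr.
  rewrite (gtn_eqF (_ : j < i)); last by lia.
  by rewrite (gtn_eqF (_ : j.+1 < i)); last by lia.
rewrite E1 E2 /tr eqxx (gtn_eqF (ltnSn j)) eqxx (negbTE h1) h2 /=. lia.
Qed.

Lemma cnt_tr j p : j.+1 < N -> cnt N (fun i => p (tr j i)) = cnt N p.
Proof.
move=> hj. rewrite /cnt (iota_split hj) !count_cat /=.
have E1 : count (fun i => p (tr j i)) (iota 0 j) = count p (iota 0 j).
  apply: eq_in_count => i; rewrite mem_iota => /andP[_ hi]; rewrite /tr.
  by rewrite (ltn_eqF hi) (ltn_eqF (ltn_trans hi (ltnSn j))).
have E2 : count (fun i => p (tr j i)) (iota j.+2 (N - j.+2)) = count p (iota j.+2 (N - j.+2)).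
  apply: eq_in_count => i; rewrite mem_iota => /andP[hi _]; rewrite /tr.
  rewrite (gtn_eqF (_ : j < i)); last by lia.
  by rewrite (gtn_eqF (_ : j.+1 < i)); last by lia.
rewrite E1 E2 /tr eqxx (gtn_eqF (ltnSn j)) eqxx. lia.
Qed.


Lemma T_canon p : T p -> T (fun i => i < cnt N p).
Proof.
move: {2}(mu N p) (leqnn (mu N p)) => M; elim: M p => [|M IH] p hM Tp.
  case: (desc_or_canon N p) => [[j [hj h1 h2]]|E]; last first.
    apply: Text Tp => i hi; exact: E.
  have := mu_tr hj h1 h2. lia.
case: (desc_or_canon N p) => [[j [hj h1 h2]]|E]; last first.
  apply: Text Tp => i hi; exact: E.
have hm := mu_tr hj h1 h2. rewrite -(cnt_tr p hj).
apply: IH; first lia. exact: T_tr.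
Qed.

Lemma T_uncanon p : T (fun i => i < cnt N p) -> T p.
Proof.
move: {2}(mu N p) (leqnn (mu N p)) => M; elim: M p => [|M IH] p hM Tp.
  case: (desc_or_canon N p) => [[j [hj h1 h2]]|E]; last first.
    apply: Text Tp => i hi; by rewrite E.
  have := mu_tr hj h1 h2. lia.
case: (desc_or_canon N p) => [[j [hj h1 h2]]|E]; last first.
  apply: Text Tp => i hi; by rewrite E.
have hm := mu_tr hj h1 h2.
have Tp' : T (fun i => p (tr j i)).
  apply: IH; first lia. by rewrite (cnt_tr p hj).
have := T_tr hj Tp'. apply: Text => i hi /=. by rewrite trK.
Qed.

Lemma T_perm p q : T p -> cnt N p = cnt N q -> T q.
Proof. move=> Tp e. apply: T_uncanon. rewrite -e. exact: T_canon. Qed.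

End OneD.

Lemma cnt_last N p : 0 < N -> cnt N p = cnt N.-1 p + p N.-1.
Proof.
move=> hN. rewrite /cnt -{1}(prednK hN) -addn1 iotaD count_cat /= add0n addn0. done.
Qed.

Lemma cnt_le N p : cnt N p <= N.
Proof. rewrite /cnt. have := count_size p (iota 0 N). by rewrite size_iota. Qed.

Lemma cnt_ext N p q : agree N p q -> cnt N p = cnt N q.
Proof. move=> E. apply: eq_in_count => i; rewrite mem_iota => /andP[_ h]; exact: E. Qed.

Lemma cnt_top N k : k <= N -> cnt N (fun i => N - k <= i) = k.
Proof.
move=> hk. rewrite /cnt (_ : N = (N - k) + k); last by lia.
rewrite iotaD count_cat add0n.
rewrite (@eq_in_count _ _ pred0 (iota 0 (N - k))); last first.
  move=> i; rewrite mem_iota => /andP[_ h] /=. apply/negbTE; rewrite -ltnNge. lia.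
rewrite (@eq_in_count _ _ predT (iota (0 + (N - k)) k)); last first.
  move=> i; rewrite mem_iota => /andP[h _] /=. lia.
by rewrite count_pred0 count_predT size_iota.
Qed.

Lemma cnt_up N k : 0 < k < N -> cnt N (fun i => reset N i < k) = k.+1.
Proof.
move=> hk. rewrite cnt_last; last lia.
rewrite /reset eqxx (_ : 0 < k) ?addn1; last lia. congr _.+1.
rewrite -[RHS](@cnt_canon N.-1 k); last lia.
apply: cnt_ext => i hi. rewrite (_ : (i == N.-1) = false) //. lia.
Qed.

Lemma cnt_down N k : 0 < k < N -> cnt N (fun i => N - k <= reset N i) = k.-1.
Proof.
move=> hk. rewrite cnt_last; last lia.
rewrite /reset eqxx (_ : (N - k <= 0) = false) ?addn0; last lia.
rewrite -[RHS](@cnt_top N.-1 k.-1); last lia.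
apply: cnt_ext => i hi. rewrite (_ : (i == N.-1) = false); last lia.
lia.
Qed.

Section OneDU.
Variable N : nat.
Hypothesis hN : 2 <= N.
Variable T : (nat -> bool) -> Prop.
Hypothesis Text : forall p q, agree N p q -> T p -> T q.
Hypothesis Tcyc : forall p, T p -> T (fun i => p (cyc N i)).
Hypothesis Tswap : forall p, T p -> T (fun i => p (swap01 i)).
Hypothesis Treset : forall p, T p -> T (fun i => p (reset N i)).

Lemma OneD_univ p0 : T p0 -> 0 < cnt N p0 < N -> forall p, T p.
Proof.
move=> Tp0 hk0. set k0 := cnt N p0 in hk0.
have TP := @T_perm N hN T Text Tcyc Tswap.
have TC := @T_canon N hN T Text Tcyc Tswap.
have TU := @T_uncanon N hN T Text Tcyc Tswap.
have C0 : T (fun i => i < k0) by exact: TC.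
have Up : forall d, k0 + d <= N -> T (fun i => i < k0 + d).
  elim=> [|d IH] hd; first by rewrite addn0.
  have Tk : T (fun i => i < k0 + d) by apply: IH; lia.
  have := Treset Tk. move/TP => H. apply: H => //.
  rewrite cnt_up; last lia. rewrite cnt_canon; lia.
have Down : forall d, d <= k0 -> T (fun i => i < k0 - d).
  elim=> [|d IH] hd; first by rewrite subn0.
  have Tk : T (fun i => i < k0 - d) by apply: IH; lia.
  have Ttop : T (fun i => N - (k0 - d) <= i).
    apply: TP Tk _ => //. rewrite cnt_canon; last lia. rewrite cnt_top; lia.
  have := Treset Ttop. move/TP => H. apply: H => //.
  rewrite cnt_down; last lia. rewrite cnt_canon; lia.
move=> p. apply: TU => //. have hp := cnt_le N p.
case: (leqP k0 (cnt N p)) => h.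
  have := Up (cnt N p - k0). rewrite subnKC //. by apply.
have := Down (k0 - cnt N p). rewrite subKn; last lia. apply. lia.
Qed.

End OneDU.

Set Implicit Arguments. Unset Strict Implicit. Unset Printing Implicit Defensive.

Definition single (j : nat) := fun i : nat => i == j.
Definition rho (m i : nat) := swap01 (cyc m (swap01 i)).
Definition rhoinv (m i : nat) := swap01 (((swap01 i) + (2 * m).-1) %% m).
Arguments cyc : simpl never.
Arguments rho : simpl never.
Arguments rhoinv : simpl never.

Lemma swap01_eq x j : (swap01 x == j) = (x == swap01 j).
Proof. apply/eqP/eqP => [<-|->]; by rewrite swap01K. Qed.

Lemma cycE n x : x < n -> cyc n x = if x.+1 == n then 0 else x.+1.
Proof.
move=> hx; rewrite /cyc. case: eqP => [->|h]; first by rewrite modnn.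
rewrite modn_small //. lia.
Qed.

Lemma cyc_eq n x j : x < n -> j < n -> (cyc n x == cyc n j) = (x == j).
Proof.
move=> hx hj; rewrite (cycE hx) (cycE hj).
case: (eqVneq x.+1 n) => h1; case: (eqVneq j.+1 n) => h2; apply/eqP/eqP; lia.
Qed.

Lemma rot_rot m k l (P : nat -> bool) i : 0 < m ->
  P ((((i + k) %% m) + l) %% m) = P ((i + (k + l)) %% m).
Proof. move=> h. by rewrite modnDml addnA. Qed.

Lemma swap01_big i : 1 < i -> swap01 i = i.
Proof. by case: i => [|[|i]]. Qed.

Section TwoD.
Variables m n : nat.
Hypothesis hm : 3 <= m.
Hypothesis hn : 3 <= n.
Variable S : (nat -> bool) -> (nat -> bool) -> Prop.
Hypothesis Sext : forall p q p' q', agree m p p' -> agree n q q' -> S p q -> S p' q'.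
Hypothesis SA : forall p q, S p q -> S (fun i => p (cyc m i)) (fun j => q (swap01 j)).
Hypothesis SB : forall p q, S p q -> S (fun i => p (swap01 i)) (fun j => q (cyc n j)).
Hypothesis SC : forall p q, S p q -> S (fun i => p (reset m i)) (fun j => q (reset n j)).

Lemma Sextl p q p' : agree m p p' -> S p q -> S p' q.
Proof. move=> h; apply: Sext h _ => //. Qed.
Lemma Sextr p q q' : agree n q q' -> S p q -> S p q'.
Proof. move=> h; apply: Sext _ h => //. Qed.

Lemma SAk k p q : S p q -> S (fun i => p ((i + k) %% m)) (fun j => q (iter k swap01 j)).
Proof.
elim: k p q => [|k IH] p q Spq.
  apply: Sextl Spq => i hi /=. by rewrite addn0 modn_small.
have := SA (IH p q Spq). apply: Sext => [i hi|j hj] /=.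
  by rewrite /cyc modnDml addSnnS.
by rewrite -iterSr.
Qed.

Lemma SBk k p q : S p q -> S (fun i => p (iter k swap01 i)) (fun j => q ((j + k) %% n)).
Proof.
elim: k p q => [|k IH] p q Spq.
  apply: Sextr Spq => i hi /=. by rewrite addn0 modn_small.
have := SB (IH p q Spq). apply: Sext => [i hi|j hj] /=.
  by rewrite -iterSr.
by rewrite /cyc modnDml addSnnS.
Qed.


Lemma swap_agree (P : nat -> bool) : P 0 = P 1 -> agree m (fun i => P (swap01 i)) P.
Proof. move=> h i _; rewrite /swap01; case: i => [|[|i]] //=. Qed.

Definition predc j := if j == 0 then n.-1 else j.-1.

Lemma predc_lt j : j < n -> predc j < n.
Proof. rewrite /predc; case: eqP => _; lia. Qed.

Lemma cyc_single j x : x < n -> j < n -> (cyc n x == j) = (x == predc j).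
Proof.
move=> hx hj. rewrite (cycE hx) /predc.
case: (eqVneq x.+1 n) => h1; case: (eqVneq j 0) => h2; apply/eqP/eqP; lia.
Qed.

Lemma Jstep (P : nat -> bool) j : P 0 = P 1 -> j < n -> S P (single j) -> S P (single (predc j)).
Proof.
move=> hP hj HS. have := SB HS. apply: Sext => [i hi|x hx] /=.
  exact: swap_agree.
by rewrite /single cyc_single.
Qed.

Lemma Jprime (P : nat -> bool) j0 : P 0 = P 1 -> j0 < n -> S P (single j0) ->
  forall j, j < n -> S P (single j).
Proof.
move=> hP hj0 H0.
have Down : forall j, j < n -> S P (single j) -> forall d, d <= j -> S P (single (j - d)).
  move=> j hj Hj; elim=> [|d IH] hd; first by rewrite subn0.
  have hjd : j - d < n by lia.
  have := Jstep hP hjd (IH (ltnW hd)). rewrite /predc.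
  rewrite (_ : (j - d == 0) = false); last lia.
  by rewrite (_ : (j - d).-1 = j - d.+1); last lia.
have H00 : S P (single 0) by have := Down j0 hj0 H0 j0 (leqnn _); rewrite subnn.
have h0n : 0 < n by lia.
have Hn1 : S P (single n.-1) by have := Jstep hP h0n H00; rewrite /predc eqxx.
have hn1 : n.-1 < n by lia.
move=> j hj. have := Down n.-1 hn1 Hn1 (n.-1 - j). rewrite subKn; last lia. apply; lia.
Qed.

Lemma Jlemma (P : nat -> bool) j0 : P 0 = P m.-1 -> j0 < n -> S P (single j0) ->
  forall j, j < n -> S P (single j).
Proof.
move=> hP hj0 H0.
have H1 := SAk m.-1 H0.
set P2 := fun i => P ((i + m.-1) %% m) in H1.
have hP2 : P2 0 = P2 1.
  rewrite /P2 add0n modn_small; last lia. rewrite (_ : 1 + m.-1 = m); last lia. by rewrite modnn.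
have H2 : S P2 (single (iter m.-1 swap01 j0)).
  apply: Sextr H1 => x hx /=. rewrite /single !iter_swap. case: (odd _) => //. exact: swap01_eq.
have hj2 : iter m.-1 swap01 j0 < n. rewrite iter_swap; case: (odd _) => //. apply: swap01_lt => //; lia.
have All := Jprime hP2 hj2 H2.
move=> j hj. have h2n : 2 <= n by lia.
have := SA (All (swap01 j) (swap01_lt h2n hj)).
apply: Sext => [i hi|x hx] /=.
  rewrite /P2 /cyc modnDml addSnnS (_ : i + m.-1.+1 = i + m); last lia. by rewrite modnDr modn_small.
by rewrite /single swap01_eq swap01K.
Qed.

Lemma reset_single1 x : x < n -> (reset n x == 1) = (x == 1).
Proof. move=> hx; rewrite /reset; case: (eqVneq x n.-1) => h; apply/eqP/eqP; lia. Qed.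

Lemma all_singles :
  (exists P j, [/\ P 0 = P m.-1, 0 < cnt m P < m, j < n & S P (single j)]) ->
  forall P j, j < n -> S P (single j).
Proof.
case=> P0 [j0 [g c hj0 H0]].
pose T := fun P => forall j, j < n -> S P (single j).
have Text : forall p q, agree m p q -> T p -> T q.
  move=> p q h Tp j hj; apply: Sextl (Tp j hj) => i hi; exact: h.
have h2n : 2 <= n by lia.
have Tcyc : forall p, T p -> T (fun i => p (cyc m i)).
  move=> p Tp j hj. have := SA (Tp (swap01 j) (swap01_lt h2n hj)).
  apply: Sextr => x hx /=. by rewrite /single swap01_eq swap01K.
have Tswap : forall p, T p -> T (fun i => p (swap01 i)).
  move=> p Tp j hj. have hn0 : 0 < n by lia.
  have := SB (Tp (cyc n j) (cyc_lt j hn0)).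
  apply: Sextr => x hx /=. by rewrite /single cyc_eq.
have Treset : forall p, T p -> T (fun i => p (reset m i)).
  move=> p Tp. have h1n : 1 < n by lia.
  have := SC (Tp 1 h1n). move/(Sextr (q' := single 1)) => H1.
  have H1' : S (fun i => p (reset m i)) (single 1).
    apply: H1 => x hx /=. by rewrite /single reset_single1.
  apply: Jlemma H1' => //.
  rewrite /reset (_ : (0 == m.-1) = false); last lia. by rewrite eqxx.
have TP0 : T P0 := Jlemma g hj0 H0.
have hm2 : 2 <= m by lia.
move=> P j hj. exact: (OneD_univ hm2 Text Tcyc Tswap Treset TP0 c P j hj).
Qed.

Lemma rho_val i : i < m -> rho m i =
  if i == 0 then 2 else if i == 1 then 0 else if i == m.-1 then 1 else i.+1.
Proof.
rewrite /rho. case: i => [|[|i]] hi.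
- have h2 : 2 < m by lia. have -> : cyc m (swap01 0) = 2 by rewrite /cyc (modn_small h2).
  done.
- have h2 : 1 < m by lia. have -> : cyc m (swap01 1) = 1 by rewrite /cyc (modn_small h2).
  done.
- have -> : swap01 i.+2 = i.+2 by [].
  rewrite (cycE hi). case: (eqVneq i.+3 m) => h.
    by rewrite (_ : i.+2 == m.-1); last lia.
  rewrite (_ : (i.+2 == m.-1) = false); last lia. done.
Qed.

Lemma rhoinv_val i : i < m -> rhoinv m i =
  if i == 0 then 1 else if i == 1 then m.-1 else if i == 2 then 0 else i.-1.
Proof.
rewrite /rhoinv. case: i => [|[|[|i]]] hi.
- have -> : swap01 0 = 1 by [].
  rewrite (_ : 1 + (2 * m).-1 = m + m); last lia.
  by rewrite modnDl modnn.
- have -> : swap01 1 = 0 by [].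
  rewrite add0n mod_lt2; [|lia|lia].
  rewrite (_ : (2 * m).-1 - m = m.-1); last lia.
  rewrite swap01_big; last lia. done.
- have -> : swap01 2 = 2 by [].
  rewrite (_ : 2 + (2 * m).-1 = 1 + m + m); last lia.
  by rewrite modnDr modnDr modn_small; last lia.
- have -> : swap01 i.+3 = i.+3 by [].
  rewrite (_ : i.+3 + (2 * m).-1 = i.+2 + m + m); last lia.
  by rewrite modnDr modnDr modn_small; last lia.
Qed.

Lemma rho_rhoinv i : i < m -> rho m (rhoinv m i) = i.
Proof.
move=> hi. rewrite rhoinv_val //. case: i hi => [|[|[|i]]] hi /=.
- rewrite rho_val; last lia. done.
- have h1 : m.-1 < m by lia.
  rewrite (rho_val h1) (_ : (m.-1 == 0) = false); last lia.
  by rewrite (_ : (m.-1 == 1) = false) ?eqxx; last lia.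
- rewrite rho_val; last lia. done.
- have h1 : i.+2 < m by lia.
  rewrite (rho_val h1) (_ : (i.+2 == m.-1) = false); last lia. done.
Qed.

Lemma swapL_arith j : j < n ->
  (swap01 (cyc n j) + (2 * n).-1) %% n = if j == 0 then n.-1 else if j == n.-1 then 0 else j.
Proof.
move=> hj. rewrite (cycE hj). case: j hj => [|j] hj.
  rewrite (_ : (1 == n) = false) /=; last lia.
  rewrite add0n mod_lt2; [lia|lia|lia].
case: (eqVneq j.+2 n) => h /=.
  rewrite (_ : (j.+1 == n.-1)); last lia.
  rewrite (_ : 1 + (2 * n).-1 = n + n); last lia.
  by rewrite modnDl modnn.
rewrite swap01_big; last lia.
rewrite (_ : (j.+1 == n.-1) = false) /=; last lia.
rewrite (_ : j.+2 + (2 * n).-1 = j.+1 + n + n); last lia.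
by rewrite modnDr modnDr modn_small; last lia.
Qed.

Lemma odd_2pred k : 0 < k -> odd (2 * k).-1.
Proof. move=> h. rewrite (_ : (2 * k).-1 = (k.-1).*2.+1); last lia. by rewrite /= odd_double. Qed.

Section GoodToAll.
Variable X : nat -> bool.
Hypothesis hX : X 0 = X n.-1.

Lemma XswapL : agree n (fun j => X ((swap01 (cyc n j) + (2 * n).-1) %% n)) X.
Proof.
move=> j hj /=. rewrite swapL_arith //.
case: (eqVneq j 0) => [->|h0] /=; first by rewrite hX.
case: (eqVneq j n.-1) => [->|h1] //=.
Qed.

Lemma W_rot2 P : S P X -> S (fun i => P ((i + 2) %% m)) X.
Proof. move/(SAk 2). apply: Sextr => j hj /=. by rewrite swap01K. Qed.

Lemma W_rot_even P t : S P X -> S (fun i => P ((i + 2 * t) %% m)) X.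
Proof.
move=> H; elim: t => [|t IH].
  apply: Sextl H => i hi. by rewrite muln0 addn0 modn_small.
have := W_rot2 IH. apply: Sextl => i hi /=. by rewrite rot_rot; [rewrite mulnS addnC|lia].
Qed.

Lemma W_rot P k : ~~ odd k || odd m -> S P X -> S (fun i => P ((i + k) %% m)) X.
Proof.
case: (boolP (odd k)) => hk /= hm' H.
  have hkm : ~~ odd (k + m) by rewrite oddD hk hm'.
  have := W_rot_even (k + m)./2 H. rewrite mul2n (even_halfK hkm).
  apply: Sextl => i hi. by rewrite addnA modnDr.
by have := W_rot_even k./2 H; rewrite mul2n (even_halfK hk).
Qed.

Lemma W_rho P : S P X -> S (fun i => P (rho m i)) X.
Proof.
move=> H. have := SB (SA (SBk (2 * n).-1 H)). apply: Sext => [i hi|]; last exact: XswapL.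
by rewrite /= iter_swap odd_2pred; last lia.
Qed.

Lemma W_rhoinv P : S P X -> S (fun i => P (rhoinv m i)) X.
Proof.
move=> H. have := SB (SAk (2 * m).-1 (SBk (2 * n).-1 H)). apply: Sext => [i hi|j hj] /=.
  by rewrite iter_swap odd_2pred; last lia.
rewrite iter_swap odd_2pred; last lia. exact: XswapL.
Qed.


Hypothesis Hg : forall P, P 0 = P m.-1 -> S P X.

Lemma stepA P i : i < m -> P i = P ((i + 1) %% m) -> odd i || odd m -> S P X.
Proof.
move=> hi hP hodd.
have G : S (fun j => P ((j + i.+1) %% m)) X.
  apply: Hg. rewrite add0n (_ : m.-1 + i.+1 = i + m); last lia.
  by rewrite modnDr (modn_small hi) hP addn1.
have hpar : ~~ odd (m.-1 * i.+1) || odd m.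
  case: (boolP (odd m)) => hm'; first by rewrite orbT.
  rewrite orbF oddM /= negb_and. rewrite (negbTE hm') orbF in hodd. by rewrite hodd orbT.
have := W_rot hpar G. apply: Sextl => j hj /=.
rewrite modnDml -addnA (_ : m.-1 * i.+1 + i.+1 = i.+1 * m); last first.
  rewrite [i.+1 * m]mulnC -[X in _ = X * _](prednK (_ : 0 < m)); last lia. by rewrite mulSn addnC.
by rewrite addnC modnMDl modn_small.
Qed.

Lemma odd_m_pair (P : nat -> bool) : odd m -> exists2 i, i < m & P i = P ((i + 1) %% m).
Proof.
move=> hodd. case: (boolP [exists i : 'I_m, P i == P ((i + 1) %% m)]).
  move=> /existsP [i /eqP h]. by exists i.
move=> /existsPn H. exfalso.
have alt : forall i, i < m -> P i = P 0 (+) odd i.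
  elim=> [|i IH] hi; first by rewrite addbF.
  have := H (Ordinal (ltnW hi)). rewrite /= (_ : (i + 1) %% m = i.+1); last first.
    rewrite modn_small; lia.
  rewrite IH ?(ltnW hi) // => /eqP ne. rewrite /=. 
  case: (P i.+1) ne; case: (P 0); case: (odd i) => //=.
have hm1 : m.-1 < m by lia.
have := H (Ordinal hm1). rewrite /= (_ : (m.-1 + 1) %% m = 0); last first.
  by rewrite addn1 prednK ?modnn //; lia.
rewrite alt // (_ : odd m.-1 = false); last first.
  move: hodd; rewrite -{1}(prednK (_ : 0 < m)) /=; last lia. by case: (odd m.-1).
by rewrite addbF eqxx.
Qed.


Lemma even_lt i : ~~ odd i -> ~~ odd m -> i < m -> i.+1 < m.
Proof.
move=> hi hm' h. rewrite ltn_neqAle h andbT. apply/negP => /eqP E.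
by move: hm'; rewrite -E /= hi.
Qed.

Lemma stepB (P : nat -> bool) i : 6 <= m -> ~~ odd m -> i < m -> ~~ odd i -> P i = P ((i + 1) %% m) -> S P X.
Proof.
move=> hm6 hme hi hie hP.
have hi1 := even_lt hie hme hi.
set k := i + m - 4.
set P2 := fun j => P ((j + k) %% m).
set P3 := fun j => P2 (rho m j).
have h3 : rho m 3 = 4.
  rewrite rho_val; last lia. by rewrite (_ : (3 == m.-1) = false); last lia.
have h4 : rho m 4 = 5.
  rewrite rho_val; last lia. by rewrite (_ : (4 == m.-1) = false); last lia.
have S3 : S P3 X.
  apply: (@stepA P3 3) => //; first lia.
  rewrite /P3 h3 (_ : (3 + 1) %% m = 4); last by rewrite modn_small; lia.
  rewrite h4 /P2 /k (_ : 4 + (i + m - 4) = i + m); last lia.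
  rewrite (_ : 5 + (i + m - 4) = i.+1 + m); last lia.
  rewrite !modnDr (modn_small hi) (modn_small hi1) hP addn1 modn_small //.
have S2 : S P2 X.
  have := W_rhoinv S3. apply: Sextl => j hj /=. by rewrite /P3 rho_rhoinv.
have hpar : ~~ odd (m + 4 - i) || odd m.
  rewrite oddB; last lia. rewrite oddD /= (negbTE hme) (negbTE hie) //.
have := W_rot hpar S2. apply: Sextl => j hj /=.
rewrite /P2 rot_rot; last lia.
rewrite (_ : m + 4 - i + k = m + m); last by rewrite /k; lia.
by rewrite addnA !modnDr modn_small.
Qed.

Lemma stepC (P : nat -> bool) : 6 <= m -> ~~ odd m ->
  (forall i : 'I_m, P i != P ((i + 1) %% m)) -> S P X.
Proof.
move=> hm6 hme H.
have hm1 : m.-1 < m by lia.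
have hm0 : 0 < m by lia.
have e1 := H (Ordinal hm1). have e0 := H (Ordinal hm0).
rewrite /= (_ : (m.-1 + 1) %% m = 0) in e1; last by rewrite addn1 prednK ?modnn //; lia.
rewrite /= add0n modn_small in e0; last lia.
have S1 : S (fun j => P (rho m j)) X.
  apply: (@stepB _ m.-2) => //; [lia| |].
  - rewrite -subn2 oddB; last lia. by rewrite (negbTE hme).
  - rewrite (_ : (m.-2 + 1) %% m = m.-1); last by rewrite modn_small; lia.
    have r1 : m.-2 < m by lia.
    rewrite (rho_val r1) (rho_val hm1).
    have f1 : (m.-2 == 0) = false by lia.
    have f2 : (m.-2 == 1) = false by lia.
    have f3 : (m.-2 == m.-1) = false by lia.
    have f4 : (m.-1 == 0) = false by lia.
    have f5 : (m.-1 == 1) = false by lia.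
    rewrite f1 f2 f3 f4 f5 eqxx (_ : m.-2.+1 = m.-1); last lia.
    move: e1 e0; case: (P m.-1); case: (P 0); case: (P 1) => //.
have := W_rhoinv S1. apply: Sextl => j hj /=. by rewrite rho_rhoinv.
Qed.

Lemma good_to_all : m != 4 -> forall P, S P X.
Proof.
move=> hm4 P. case: (boolP (odd m)) => hmo.
  case: (odd_m_pair P hmo) => i hi hP. apply: (stepA hi hP). by rewrite hmo orbT.
have hm6 : 6 <= m.
  case: (ltnP m 6) => // h. exfalso. have : m = 4 \/ m = 3 \/ m = 5 by lia.
  case=> [E|[E|E]]; [by rewrite E in hm4|by rewrite E in hmo|by rewrite E in hmo].
case: (boolP [exists i : 'I_m, P i == P ((i + 1) %% m)]).
  move=> /existsP [i /eqP h]. case: (boolP (odd i)) => hio.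
    by apply: (stepA (ltn_ord i) h); rewrite hio.
  exact: (stepB hm6 hmo (ltn_ord i) hio h).
move=> /existsPn H. exact: stepC.
Qed.

End GoodToAll.

Lemma all_pairs : m != 4 ->
  (exists P j, [/\ P 0 = P m.-1, 0 < cnt m P < m, j < n & S P (single j)]) ->
  forall P Q, S P Q.
Proof.
move=> hm4 Hbase.
have Sing := all_singles Hbase.
pose V := fun Q => forall P, S P Q.
have Vext : forall Q Q', agree n Q Q' -> V Q -> V Q'.
  move=> Q Q' h VQ P. exact: Sextr h (VQ P).
have Vcyc : forall Q, V Q -> V (fun j => Q (cyc n j)).
  move=> Q VQ P. have := SB (VQ (fun i => P (swap01 i))). apply: Sextl => i _ /=. by rewrite swap01K.
have Vswap : forall Q, V Q -> V (fun j => Q (swap01 j)).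
  move=> Q VQ P. have := SA (VQ (fun i => P ((i + m.-1) %% m))). apply: Sextl => i hi /=.
  rewrite /cyc modnDml addSnnS (_ : i + m.-1.+1 = i + m); last lia.
  by rewrite modnDr modn_small.
have h2n : 2 <= n by lia.
have VP := T_perm h2n Vext Vcyc Vswap.
have goodreset : forall P : nat -> bool, P 0 = P m.-1 -> agree m (fun i => P (reset m i)) P.
  move=> P hP i hi. rewrite /reset. case: (eqVneq i m.-1) => [->|] //.
have V1 : V (fun j => j < 1).
  apply: VP (fun P => Sing P 0 _) _; first lia.
  rewrite cnt_canon; last lia. rewrite (cnt_ext (q := fun j => j < 1)) ?cnt_canon //; first lia.
  move=> j hj. by rewrite /single; case: j hj.
have Up : forall k, 0 < k < n -> V (fun j => j < k) -> V (fun j => j < k.+1).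
  move=> k hk Vk. have hk0 : 0 < k by lia.
  set Xs := fun j => (j < k) || (j == n.-1).
  have VXs : V Xs.
    apply: (good_to_all (X := Xs)) => //.
      by rewrite /Xs eqxx orbT hk0.
    move=> P hP. have := SC (Vk P). apply: Sext; first exact: goodreset.
    move=> j hj /=. rewrite /Xs /reset. case: (eqVneq j n.-1) => [->|h].
      by rewrite hk0 ?orbT.
    by rewrite orbF.
  apply: VP VXs _. rewrite cnt_canon; last lia. rewrite -(cnt_up (N := n) hk).
  apply: cnt_ext => j hj. rewrite /Xs /reset. case: (eqVneq j n.-1) => [->|h].
    by rewrite hk0 ?orbT.
  by rewrite orbF.
have V0 : V (fun j => j < 0).
  have hn1 : n.-1 < n by lia.
  have VXs : V (fun _ => false).
    apply: (good_to_all (X := fun _ => false)) => //.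
    move=> P hP. have := SC (Sing P n.-1 hn1). apply: Sext; first exact: goodreset.
    move=> j hj /=. rewrite /single /reset. case: (eqVneq j n.-1) => h /=; last by rewrite (negbTE h).
    lia.
  apply: Vext VXs => j hj. by [].
have Vall : forall k, k <= n -> V (fun j => j < k).
  case=> [|k] hk; first exact: V0.
  elim: k hk => [|k IH] hk; first exact: V1.
  apply: Up; first lia. apply: IH; lia.
move=> P Q. apply: (VP _ _ (Vall _ (cnt_le n Q))). by rewrite cnt_canon // cnt_le.
Qed.

End TwoD.

Set Implicit Arguments. Unset Strict Implicit. Unset Printing Implicit Defensive.

Definition F2 (n : nat) : seq nat := if 4 <= n then [:: 1; 3] else [:: 1].
Definition XK (m : nat) (w : word) (i : nat) := foldl (U_abc_step m) i (rev w) \in [:: 0; 2].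
Definition YL (n : nat) (w : word) (j : nat) := foldl (U_bac_step n) j (rev w) \in F2 n.
Definition Sreach (m n : nat) (p q : nat -> bool) :=
  exists w, agree m (XK m w) p /\ agree n (YL n w) q.

Lemma XK_rcons m w x i : XK m (rcons w x) i = XK m w (U_abc_step m i x).
Proof. by rewrite /XK rev_rcons. Qed.
Lemma YL_rcons n w x j : YL n (rcons w x) j = YL n w (U_bac_step n j x).
Proof. by rewrite /YL rev_rcons. Qed.

Section Inst.
Variables m n : nat.
Hypothesis hm : 3 <= m.
Hypothesis hn : 3 <= n.

Lemma Sr_ext p q p' q' : agree m p p' -> agree n q q' -> Sreach m n p q -> Sreach m n p' q'.
Proof.
move=> h1 h2 [w [e1 e2]]; exists w; split=> i hi; [rewrite e1 // h1 //|rewrite e2 // h2 //].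
Qed.

Lemma Sr_A p q : Sreach m n p q -> Sreach m n (fun i => p (cyc m i)) (fun j => q (swap01 j)).
Proof.
move=> [w [e1 e2]]; exists (rcons w la); split=> i hi.
  rewrite XK_rcons e1 //. apply: cyc_lt; lia.
rewrite YL_rcons e2 //. apply: swap01_lt => //; lia.
Qed.

Lemma Sr_B p q : Sreach m n p q -> Sreach m n (fun i => p (swap01 i)) (fun j => q (cyc n j)).
Proof.
move=> [w [e1 e2]]; exists (rcons w lb); split=> i hi.
  rewrite XK_rcons e1 //. apply: swap01_lt => //; lia.
rewrite YL_rcons e2 //. apply: cyc_lt; lia.
Qed.

Lemma Sr_C p q : Sreach m n p q -> Sreach m n (fun i => p (reset m i)) (fun j => q (reset n j)).
Proof.
move=> [w [e1 e2]]; exists (rcons w lc); split=> i hi.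
  rewrite XK_rcons e1 //. exact: reset_lt.
rewrite YL_rcons e2 //. exact: reset_lt.
Qed.

End Inst.

Lemma cnt_pos N (p : nat -> bool) i : i < N -> p i -> 0 < cnt N p.
Proof.
move=> hi pi. rewrite /cnt -has_count. apply/hasP. exists i => //. by rewrite mem_iota.
Qed.

Lemma cnt_lt N (p : nat -> bool) i : i < N -> ~~ p i -> cnt N p < N.
Proof.
move=> hi pi. have := count_predC p (iota 0 N). rewrite size_iota => E.
have : 0 < count (predC p) (iota 0 N).
  rewrite -has_count. apply/hasP. exists i => //. by rewrite mem_iota.
rewrite /cnt. lia.
Qed.

Lemma reset0 N : 1 < N -> reset N 0 = 0.
Proof. move=> h; rewrite /reset; case: eqP => //; lia. Qed.
Lemma resetN N : reset N N.-1 = 0.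
Proof. by rewrite /reset eqxx. Qed.
Lemma reset_other N i : i != N.-1 -> reset N i = i.
Proof. by rewrite /reset => /negbTE ->. Qed.

Lemma reach_main m n : 3 <= m -> 3 <= n -> m != 4 -> forall p q, Sreach m n p q.
Proof.
move=> hm hn hm4.
apply: (all_pairs hm hn (@Sr_ext m n) (@Sr_A m n hm hn) (@Sr_B m n hm hn) (@Sr_C m n)) => //.
set P := fun i => reset m i \in [:: 0; 2].
have P0 : P 0 by rewrite /P reset0 //; lia.
have Pm : P m.-1 by rewrite /P resetN.
have P1 : ~~ P 1 by rewrite /P reset_other //; lia.
exists P, 1; split => //.
- by rewrite P0 Pm.
- rewrite (cnt_pos (_ : 0 < m) P0) /=; last lia. apply: (cnt_lt (_ : 1 < m) P1); lia.
- lia.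
case: (eqVneq n 3) => [E|hn3].
  exists [:: lc]; split=> i hi //.
  rewrite /YL /F2 E /= /single. move: hi; rewrite E.
  by case: i => [|[|[|i]]].
exists [:: lb; lb; lc]; split=> i hi.
  by rewrite /XK /= swap01K.
have hn4 : 4 <= n by lia.
rewrite /YL /F2 hn4 /= /single.
case: (eqVneq i n.-1) => [->|h].
  rewrite resetN (cycE (_ : 0 < n)); last lia.
  rewrite (_ : (1 == n) = false); last lia.
  rewrite (cycE (_ : 1 < n)); last lia.
  rewrite (_ : (2 == n) = false); last lia.
  by rewrite (_ : (n.-1 == 1) = false); last lia.
rewrite reset_other // (cycE hi) (_ : (i.+1 == n) = false); last lia.
rewrite (cycE (_ : i.+1 < n)); last lia.
case: (eqVneq i.+2 n) => h2 /=.
  by rewrite (_ : (i == 1) = false); last lia.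
rewrite !inE. case: (eqVneq i 1) => [->//|h1]. apply/negbTE. rewrite negb_or. apply/andP; split; lia.
Qed.

Lemma reach_swapped n : 3 <= n -> n != 4 -> forall p q, Sreach 4 n p q.
Proof.
move=> hn hn4.
have h4 : 3 <= 4 by [].
pose S' := fun q p => Sreach 4 n p q.
have Sext' : forall p q p' q', agree n p p' -> agree 4 q q' -> S' p q -> S' p' q'.
  move=> p q p' q' h1 h2; exact: Sr_ext.
have SA' : forall p q, S' p q -> S' (fun i => p (cyc n i)) (fun j => q (swap01 j)).
  move=> p q; exact: (@Sr_B 4 n h4 hn).
have SB' : forall p q, S' p q -> S' (fun i => p (swap01 i)) (fun j => q (cyc 4 j)).
  move=> p q; exact: (@Sr_A 4 n h4 hn).
have SC' : forall p q, S' p q -> S' (fun i => p (reset n i)) (fun j => q (reset 4 j)).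
  move=> p q; exact: (@Sr_C 4 n).
move=> p q. apply: (all_pairs hn h4 Sext' SA' SB' SC' hn4).
set Q := YL n [:: la; lc].
have F1 : 1 \in F2 n by rewrite /F2; case: ifP.
have F0 : 0 \notin F2 n by rewrite /F2; case: ifP.
have Q0 : Q 0 by rewrite /Q /YL /= reset0 //; lia.
have Qn : Q n.-1 by rewrite /Q /YL /= resetN.
have Q1 : ~~ Q 1 by rewrite /Q /YL /= reset_other //; lia.
exists Q, 1; split => //.
- by rewrite Q0 Qn.
- rewrite (cnt_pos (_ : 0 < n) Q0) /=; last lia. apply: (cnt_lt (_ : 1 < n) Q1); lia.
exists [:: la; lc]; split=> i hi //.
rewrite /XK /single /=. by case: i hi => [|[|[|[|i]]]].
Qed.

Definition ws44 : seq word := [:: [::];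
 [:: la];
 [:: lb];
 [:: lc];
 [:: la; lb];
 [:: la; lc];
 [:: lb; la];
 [:: lb; lc];
 [:: lc; la];
 [:: la; lb; la];
 [:: la; lb; lb];
 [:: la; lb; lc];
 [:: la; lc; la];
 [:: la; lc; lb];
 [:: lb; la; la];
 [:: lb; la; lb];
 [:: lb; la; lc];
 [:: lb; lc; la];
 [:: lb; lc; lb];
 [:: lc; la; la];
 [:: lc; la; lb];
 [:: lc; la; lc];
 [:: la; lb; la; la];
 [:: la; lb; la; lb];
 [:: la; lb; la; lc];
 [:: la; lb; lb; la];
 [:: la; lb; lb; lb];
 [:: la; lb; lb; lc];
 [:: la; lb; lc; la];
 [:: la; lb; lc; lb];
 [:: la; lc; la; la];
 [:: la; lc; la; lb];
 [:: la; lc; la; lc];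
 [:: la; lc; lb; la];
 [:: lb; la; la; lb];
 [:: lb; la; la; lc];
 [:: lb; la; lb; lb];
 [:: lb; la; lb; lc];
 [:: lb; la; lc; la];
 [:: lb; la; lc; lb];
 [:: lb; lc; la; lb];
 [:: lb; lc; lb; la];
 [:: lb; lc; lb; lb];
 [:: lb; lc; lb; lc];
 [:: lc; la; la; la];
 [:: lc; la; la; lb];
 [:: lc; la; la; lc];
 [:: lc; la; lb; la];
 [:: lc; la; lb; lb];
 [:: lc; la; lb; lc];
 [:: lc; la; lc; la];
 [:: lc; la; lc; lb];
 [:: la; lb; la; la; la];
 [:: la; lb; la; la; lb];
 [:: la; lb; la; la; lc];
 [:: la; lb; la; lb; lb];
 [:: la; lb; la; lb; lc];
 [:: la; lb; la; lc; la];
 [:: la; lb; la; lc; lb];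
 [:: la; lb; lb; la; lb];
 [:: la; lb; lb; la; lc];
 [:: la; lb; lb; lb; lc];
 [:: la; lb; lb; lc; la];
 [:: la; lb; lb; lc; lb];
 [:: la; lb; lc; la; lb];
 [:: la; lb; lc; lb; la];
 [:: la; lb; lc; lb; lb];
 [:: la; lb; lc; lb; lc];
 [:: la; lc; la; la; la];
 [:: la; lc; la; la; lc];
 [:: la; lc; la; lb; la];
 [:: la; lc; la; lb; lc];
 [:: la; lc; la; lc; la];
 [:: la; lc; la; lc; lb];
 [:: la; lc; lb; la; la];
 [:: la; lc; lb; la; lb];
 [:: la; lc; lb; la; lc];
 [:: lb; la; la; lb; la];
 [:: lb; la; la; lc; la];
 [:: lb; la; la; lc; lb];
 [:: lb; la; lb; lb; la];
 [:: lb; la; lb; lb; lc];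
 [:: lb; la; lb; lc; la];
 [:: lb; la; lb; lc; lb];
 [:: lb; la; lc; la; la];
 [:: lb; la; lc; la; lb];
 [:: lb; la; lc; lb; la];
 [:: lb; lc; la; lb; la];
 [:: lb; lc; la; lb; lb];
 [:: lb; lc; la; lb; lc];
 [:: lb; lc; lb; la; lb];
 [:: lb; lc; lb; lb; lb];
 [:: lb; lc; lb; lb; lc];
 [:: lb; lc; lb; lc; la];
 [:: lb; lc; lb; lc; lb];
 [:: lc; la; la; la; lb];
 [:: lc; la; la; lb; la];
 [:: lc; la; la; lb; lb];
 [:: lc; la; la; lb; lc];
 [:: lc; la; la; lc; la];
 [:: lc; la; lb; la; lb];
 [:: lc; la; lb; la; lc];
 [:: lc; la; lb; lb; la];
 [:: lc; la; lb; lc; la];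
 [:: lc; la; lc; la; la];
 [:: lc; la; lc; la; lb];
 [:: lc; la; lc; lb; la];
 [:: lc; la; lc; lb; lb];
 [:: la; lb; la; la; la; lc];
 [:: la; lb; la; la; lb; la];
 [:: la; lb; la; la; lb; lb];
 [:: la; lb; la; la; lc; la];
 [:: la; lb; la; la; lc; lb];
 [:: la; lb; la; lb; lb; lb];
 [:: la; lb; la; lb; lb; lc];
 [:: la; lb; la; lb; lc; lb];
 [:: la; lb; la; lc; la; la];
 [:: la; lb; la; lc; la; lb];
 [:: la; lb; la; lc; lb; la];
 [:: la; lb; la; lc; lb; lb];
 [:: la; lb; lb; la; lb; lc];
 [:: la; lb; lb; la; lc; la];
 [:: la; lb; lb; lb; lc; la];
 [:: la; lb; lb; lc; la; lb];
 [:: la; lb; lb; lc; lb; la];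
 [:: la; lb; lc; la; lb; la];
 [:: la; lb; lc; lb; la; lb];
 [:: la; lb; lc; lb; la; lc];
 [:: la; lb; lc; lb; lb; lb];
 [:: la; lb; lc; lb; lc; la];
 [:: la; lc; la; la; la; lb];
 [:: la; lc; la; la; lc; la];
 [:: la; lc; la; la; lc; lb];
 [:: la; lc; la; lb; la; la];
 [:: la; lc; la; lb; la; lb];
 [:: la; lc; la; lb; la; lc];
 [:: la; lc; la; lb; lc; la];
 [:: la; lc; la; lc; la; lb];
 [:: la; lc; la; lc; la; lc];
 [:: la; lc; la; lc; lb; lb];
 [:: la; lc; lb; la; la; la];
 [:: la; lc; lb; la; lb; lc];
 [:: la; lc; lb; la; lc; lb];
 [:: lb; la; la; lc; la; lb];
 [:: lb; la; la; lc; lb; la];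
 [:: lb; la; lb; lb; lc; la];
 [:: lb; la; lb; lb; lc; lb];
 [:: lb; la; lb; lc; la; la];
 [:: lb; la; lb; lc; la; lb];
 [:: lb; la; lb; lc; lb; la];
 [:: lb; la; lb; lc; lb; lb];
 [:: lb; la; lc; la; la; la];
 [:: lb; la; lc; la; lb; la];
 [:: lb; la; lc; lb; la; lb];
 [:: lb; lc; la; lb; la; lb];
 [:: lb; lc; la; lb; la; lc];
 [:: lb; lc; la; lb; lb; lb];
 [:: lb; lc; la; lb; lc; la];
 [:: lb; lc; lb; la; lb; la];
 [:: lb; lc; lb; la; lb; lb];
 [:: lb; lc; lb; lb; lc; la];
 [:: lb; lc; lb; lb; lc; lb];
 [:: lb; lc; lb; lc; la; la];
 [:: lb; lc; lb; lc; lb; la];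
 [:: lb; lc; lb; lc; lb; lc];
 [:: lc; la; la; la; lb; lc];
 [:: lc; la; la; lb; la; la];
 [:: lc; la; la; lb; lb; lc];
 [:: lc; la; la; lb; lc; la];
 [:: lc; la; la; lb; lc; lb];
 [:: lc; la; la; lc; la; lb];
 [:: lc; la; lb; la; lb; lb];
 [:: lc; la; lb; la; lc; la];
 [:: lc; la; lb; la; lc; lb];
 [:: lc; la; lb; lb; la; lc];
 [:: lc; la; lb; lc; la; la];
 [:: lc; la; lc; la; la; la];
 [:: lc; la; lc; lb; lb; lb];
 [:: la; lb; la; la; lc; la; lb];
 [:: la; lb; la; lb; lb; lc; la];
 [:: la; lb; la; lb; lb; lc; lb];
 [:: la; lb; la; lc; la; la; la];
 [:: la; lb; la; lc; la; lb; la];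
 [:: la; lb; la; lc; lb; la; lb];
 [:: la; lb; la; lc; lb; lb; lb];
 [:: la; lb; lb; la; lb; lc; la];
 [:: la; lb; lb; la; lc; la; la];
 [:: la; lb; lb; la; lc; la; lb];
 [:: la; lb; lb; lc; la; lb; la];
 [:: la; lb; lb; lc; lb; la; lc];
 [:: la; lb; lc; la; lb; la; lb];
 [:: la; lb; lc; lb; la; lb; la];
 [:: la; lb; lc; lb; la; lb; lb];
 [:: la; lb; lc; lb; la; lc; lb];
 [:: la; lb; lc; lb; lb; lb; lc];
 [:: la; lb; lc; lb; lc; la; la];
 [:: la; lb; lc; lb; lc; la; lb];
 [:: la; lc; la; la; lc; la; lb];
 [:: la; lc; la; lb; la; la; lb];
 [:: la; lc; la; lb; la; la; lc];
 [:: la; lc; la; lb; la; lc; la];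
 [:: la; lc; la; lb; la; lc; lb];
 [:: la; lc; la; lb; lc; la; la];
 [:: la; lc; la; lb; lc; la; lb];
 [:: la; lc; la; lc; la; lb; lc];
 [:: la; lc; la; lc; lb; lb; lb];
 [:: la; lc; la; lc; lb; lb; lc];
 [:: la; lc; lb; la; lb; lc; lb];
 [:: la; lc; lb; la; lc; lb; la];
 [:: lb; la; la; lc; la; lb; lc];
 [:: lb; la; la; lc; lb; la; lb];
 [:: lb; la; lb; lb; lc; lb; la];
 [:: lb; la; lb; lc; la; la; la];
 [:: lb; la; lb; lc; la; lb; la];
 [:: lb; la; lb; lc; lb; la; lb];
 [:: lb; la; lb; lc; lb; lb; lb];
 [:: lb; la; lc; la; la; la; lb];
 [:: lb; la; lc; la; la; la; lc];
 [:: lb; la; lc; la; lb; la; la];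
 [:: lb; la; lc; la; lb; la; lb];
 [:: lb; lc; la; lb; la; lc; la];
 [:: lb; lc; la; lb; la; lc; lb];
 [:: lb; lc; la; lb; lc; la; la];
 [:: lb; lc; lb; la; lb; lb; la];
 [:: lb; lc; lb; la; lb; lb; lc];
 [:: lb; lc; lb; lc; la; la; la];
 [:: lb; lc; lb; lc; la; la; lc];
 [:: lb; lc; lb; lc; lb; la; lc];
 [:: lc; la; la; lb; lc; la; lb];
 [:: lc; la; lb; la; lc; lb; la];
 [:: la; lb; la; lb; lb; lc; la; la];
 [:: la; lb; la; lb; lb; lc; la; lb];
 [:: la; lb; la; lb; lb; lc; lb; la];
 [:: la; lb; la; lb; lb; lc; lb; lb];
 [:: la; lb; la; lc; la; lb; la; lb];
 [:: la; lb; lc; lb; lb; lb; lc; la];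
 [:: la; lc; la; lb; la; la; lc; la];
 [:: la; lc; la; lb; lc; la; la; lb];
 [:: la; lc; la; lb; lc; la; lb; la];
 [:: la; lc; la; lc; lb; lb; lc; la];
 [:: la; lc; lb; la; lc; lb; la; lb];
 [:: lb; la; lb; lc; la; lb; la; lb];
 [:: lb; la; lc; la; la; la; lc; la];
 [:: lb; lc; la; lb; lc; la; la; la];
 [:: lb; lc; lb; la; lb; lb; lc; la];
 [:: lb; lc; lb; lc; la; la; lc; lb];
 [:: la; lb; la; lb; lb; lc; la; la; la];
 [:: la; lb; la; lb; lb; lc; lb; lb; lb];
 [:: la; lb; la; lc; la; lb; la; lb; lc];
 [:: la; lb; lc; lb; lb; lb; lc; la; la];
 [:: la; lc; la; lb; la; la; lc; la; lb];
 [:: la; lc; la; lb; lc; la; la; lb; lb];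
 [:: lb; la; lb; lc; la; lb; la; lb; lc];
 [:: lb; la; lc; la; la; la; lc; la; lb];
 [:: lb; lc; lb; la; lb; lb; lc; la; la];
 [:: la; lc; la; lb; la; la; lc; la; lb; lc]].

Definition sig44 (w : word) := (map (XK 4 w) (iota 0 4), map (YL 4 w) (iota 0 4)).
Definition bs4 : seq (seq bool) := map (fun k => [seq odd (k %/ 2 ^ i) | i <- iota 0 4]) (iota 0 16).
Definition all44 := [seq (a, b) | a <- bs4, b <- bs4].

Lemma check44 : all (fun t => t \in map sig44 ws44) all44.
Proof. by vm_compute. Qed.

Lemma mem_bs4 (p : nat -> bool) : map p (iota 0 4) \in bs4.
Proof. rewrite /=. by case: (p 0); case: (p 1); case: (p 2); case: (p 3). Qed.

Lemma map_agree N (f g : nat -> bool) : map f (iota 0 N) = map g (iota 0 N) -> agree N f g.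
Proof. move/eq_in_map => h i hi. apply: h. by rewrite mem_iota. Qed.

Lemma in_map_ex (T : Type) (U : eqType) (f : T -> U) s y : y \in map f s -> exists x, y = f x.
Proof.
elim: s => //= x s IH. rewrite inE => /orP [/eqP ->|/IH //]. by exists x.
Qed.

Lemma reach44 p q : Sreach 4 4 p q.
Proof.
have ht : (map p (iota 0 4), map q (iota 0 4)) \in all44.
  apply: allpairs_f; exact: mem_bs4.
move/allP: check44 => H. have := H _ ht. case/in_map_ex => w E.
have E1 := f_equal fst E. have E2 := f_equal snd E.
exists w; split; apply: map_agree; [exact: (esym E1)|exact: (esym E2)].
Qed.

Theorem reach_all m n : 3 <= m -> 3 <= n -> forall p q, Sreach m n p q.
Proof.
move=> hm hn. case: (eqVneq m 4) => [->|hm4]; last exact: reach_main.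
case: (eqVneq n 4) => [->|hn4]; last exact: reach_swapped.
exact: reach44.
Qed.

Set Implicit Arguments. Unset Strict Implicit. Unset Printing Implicit Defensive.

Section DFA.
Variable St : finType.
Variable step : St -> letter -> St.
Variable acc : St -> bool.
Variable s0 : St.
Variable R : {set St}.
Variable L : lang.
Hypothesis HL : forall w, L w <-> acc (foldl step s0 w).

Lemma dfa_upper : s0 \in R -> (forall A x, A \in R -> step A x \in R) ->
  exists d s f, @dfa_recognizes #|R| d s f L.
Proof.
move=> hs0 hcl.
pose rk := enum_rank_in hs0.
pose d := fun (i : 'I_#|R|) x => rk (step (enum_val i) x).
exists d, (rk s0), (fun i => acc (enum_val i)).
have key : forall w A, A \in R -> enum_val (foldl d (rk A) w) = foldl step A w.
  elim=> [|x w IH] A hA /=; first by rewrite enum_rankK_in.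
  rewrite /d enum_rankK_in //. exact: IH (hcl A x hA).
move=> w /=. rewrite key //. split; by move/HL.
Qed.

Lemma dfa_lower :
  (forall A, A \in R -> exists w, foldl step s0 w = A) ->
  (forall A B, A \in R -> B \in R -> A != B -> exists z, acc (foldl step A z) != acc (foldl step B z)) ->
  forall k d s f, @dfa_recognizes k d s f L -> #|R| <= k.
Proof.
move=> hreach hdist k d s f hrec.
have hw : forall A, exists w, A \in R -> foldl step s0 w = A.
  move=> A. case: (boolP (A \in R)) => hA.
    case: (hreach A hA) => w hw; by exists w.
  by exists [::].
pose wit := fun A => proj1_sig (constructive_indefinite_description _ (hw A)).
have witP : forall A, A \in R -> foldl step s0 (wit A) = A.
  move=> A hA. rewrite /wit. by case: (constructive_indefinite_description _ _) => w /= /(_ hA).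
pose g := fun A => foldl d s (wit A).
have ginj : {in R &, injective g}.
  move=> A B hA hB hg. apply/eqP/negPn/negP => hne.
  case: (hdist A B hA hB hne) => z hz.
  have eA : acc (foldl step A z) = f (foldl d (g A) z).
    apply/idP/idP.
    - move=> h. have : L (wit A ++ z) by apply/HL; rewrite foldl_cat witP.
      by move/hrec; rewrite foldl_cat.
    - move=> h. have : L (wit A ++ z) by apply/hrec; rewrite foldl_cat.
      by move/HL; rewrite foldl_cat witP.
  have eB : acc (foldl step B z) = f (foldl d (g B) z).
    apply/idP/idP.
    - move=> h. have : L (wit B ++ z) by apply/HL; rewrite foldl_cat witP.
      by move/hrec; rewrite foldl_cat.
    - move=> h. have : L (wit B ++ z) by apply/hrec; rewrite foldl_cat.
      by move/HL; rewrite foldl_cat witP.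
  by move: hz; rewrite eA eB hg eqxx.
rewrite -(card_in_imset ginj). have := max_card (mem (g @: R)). by rewrite card_ord.
Qed.

End DFA.

Set Implicit Arguments. Unset Strict Implicit. Unset Printing Implicit Defensive.

Lemma card_sets (T : finType) : #|{set T}| = 2 ^ #|T|.
Proof. by rewrite -[LHS]cardsT -powersetT card_powerset cardsT. Qed.

Lemma foldl_nseq (T R : Type) (f : R -> T -> R) x k y :
  foldl f x (nseq k y) = iter k (fun z => f z y) x.
Proof. elim: k x => [|k IH] x //=. by rewrite IH -iterSr. Qed.

Section Concrete.
Variables m n : nat.
Hypothesis hm : 3 <= m.
Hypothesis hn : 3 <= n.

Lemma stepK_lt i x : i < m -> U_abc_step m i x < m.
Proof.
move=> hi; case: x => /=; [apply: cyc_lt; lia|apply: swap01_lt => //; lia|exact: reset_lt].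
Qed.
Lemma stepL_lt j x : j < n -> U_bac_step n j x < n.
Proof.
move=> hj; case: x => /=; [apply: swap01_lt => //; lia|apply: cyc_lt; lia|exact: reset_lt].
Qed.

Definition ostK (i : 'I_m) x : 'I_m := Ordinal (stepK_lt x (ltn_ord i)).
Definition ostL (j : 'I_n) x : 'I_n := Ordinal (stepL_lt x (ltn_ord j)).
Definition dl (q : 'I_m * 'I_n) x := (ostK q.1 x, ostL q.2 x).
Definition stp (A : {set 'I_m * 'I_n}) x := [set q | dl q x \in A].
Lemma hm0 : 0 < m. Proof. lia. Qed.
Lemma hn0 : 0 < n. Proof. lia. Qed.
Definition o0m : 'I_m := Ordinal hm0.
Definition o0n : 'I_n := Ordinal hn0.
Definition acc (A : {set 'I_m * 'I_n}) := (o0m, o0n) \in A.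
Definition Phi (op : bool -> bool -> bool) (X : {set 'I_m}) (Y : {set 'I_n}) : {set 'I_m * 'I_n} :=
  [set q | op (q.1 \in X) (q.2 \in Y)].
Definition Rop op := [set Phi op p.1 p.2 | p in [set: {set 'I_m} * {set 'I_n}]].
Definition XS w : {set 'I_m} := [set i : 'I_m | XK m w i].
Definition YS w : {set 'I_n} := [set j : 'I_n | YL n w j].

Lemma foldl_dl_val q u :
  val (foldl dl q u).1 = foldl (U_abc_step m) q.1 u /\ val (foldl dl q u).2 = foldl (U_bac_step n) q.2 u.
Proof. elim: u q => [|x u IH] q //=. exact: IH. Qed.

Lemma stp_Phi op X Y x :
  stp (Phi op X Y) x = Phi op [set i | ostK i x \in X] [set j | ostL j x \in Y].
Proof. apply/setP => q. by rewrite !inE. Qed.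

Lemma foldl_stp op w : foldl stp (Phi op (XS [::]) (YS [::])) w = Phi op (XS w) (YS w).
Proof.
elim/last_ind: w => [//|w x IH]. rewrite foldl_rcons IH stp_Phi.
congr Phi; apply/setP => i; by rewrite !inE ?XK_rcons ?YL_rcons.
Qed.

Lemma foldl_stp_gen A z : foldl stp A z = [set q | foldl dl q (rev z) \in A].
Proof.
elim/last_ind: z => [|z x IH]; first by apply/setP => q; rewrite inE.
rewrite foldl_rcons IH rev_rcons. apply/setP => q. by rewrite !inE.
Qed.

Lemma fwd_reach (q : 'I_m * 'I_n) : exists u, foldl dl (o0m, o0n) u = q.
Proof.
case: q => i j.
set t := (j + n - 2) %% n.
set k := iter t swap01 i.
have hk : k < m by rewrite /k iter_swap; case: (odd t) => //; apply: swap01_lt => //; lia.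
exists ([:: lb; lb] ++ nseq k la ++ nseq t lb).
have [e1 e2] := foldl_dl_val (o0m, o0n) ([:: lb; lb] ++ nseq k la ++ nseq t lb).
rewrite [foldl _ _ _]surjective_pairing; congr pair; apply: val_inj; rewrite ?e1 ?e2 /= !foldl_cat /= !foldl_nseq.
- rewrite (_ : iter k (fun z => U_abc_step m z la) 0 = iter k (cyc m) 0) //.
  rewrite iter_cyc; last lia. rewrite add0n modn_small //.
  rewrite (_ : iter t (fun z => U_abc_step m z lb) k = iter t swap01 k) //.
  by rewrite /k !iter_swap; case: (odd t); rewrite ?swap01K.
- rewrite (_ : iter k (fun z => U_bac_step n z la) _ = iter k swap01 (cyc n (cyc n 0))) //.
  rewrite (_ : iter t (fun z => U_bac_step n z lb) _ = iter t (cyc n) (iter k swap01 (cyc n (cyc n 0)))) //.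
  have c2 : cyc n (cyc n 0) = 2.
    rewrite (cycE (_ : 0 < n)); last lia. rewrite (_ : (1 == n) = false); last lia.
    rewrite (cycE (_ : 1 < n)); last lia. by rewrite (_ : (2 == n) = false); last lia.
  rewrite c2 iter_swap (_ : (if odd k then swap01 2 else 2) = 2); last by case: (odd k).
  rewrite iter_cyc; last lia. rewrite /t modnDmr (_ : 2 + (j + n - 2) = j + n); last lia.
  by rewrite modnDr modn_small.
Qed.


Definition natpred (N : nat) (X : {set 'I_N}) : nat -> bool := fun i => i \in map val (enum X).

Lemma natpredE N (X : {set 'I_N}) (i : 'I_N) : natpred X i = (i \in X).
Proof. by rewrite /natpred (mem_map val_inj) mem_enum. Qed.

Lemma Rop_reach op A : A \in Rop op ->
  exists w, foldl stp (Phi op (XS [::]) (YS [::])) w = A.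
Proof.
case/imsetP => [[X Y] _ ->] /=.
have [w [e1 e2]] := reach_all hm hn (natpred X) (natpred Y).
exists w. rewrite foldl_stp. congr Phi; apply/setP => i; rewrite inE -natpredE; [exact: e1|exact: e2].
Qed.

Lemma dist A B : A != B -> exists z, acc (foldl stp A z) != acc (foldl stp B z).
Proof.
move=> hAB. have [q hq] : exists q, (q \in A) != (q \in B).
  apply/existsP. apply: contraR hAB => /existsPn H. apply/eqP/setP => q.
  by move/negbNE/eqP: (H q).
have [u hu] := fwd_reach q.
exists (rev u). by rewrite /acc !foldl_stp_gen !inE revK hu.
Qed.

Lemma sc_op (op : bool -> bool -> bool) (L : lang) :
  (forall w, L w <-> op (XK m w 0) (YL n w 0)) -> state_complexity L #|Rop op|.
Proof.
move=> HL.
have HL' : forall w, L w <-> acc (foldl stp (Phi op (XS [::]) (YS [::])) w).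
  move=> w. rewrite foldl_stp /acc inE /= !inE. exact: HL.
split.
  apply: dfa_upper HL' _ _.
    apply/imsetP. by exists (XS [::], YS [::]).
  move=> A x /imsetP [[X Y] _ ->]. rewrite stp_Phi. apply/imsetP.
  by exists ([set i | ostK i x \in X], [set j | ostL j x \in Y]).
move=> k d s f hrec. apply: dfa_lower HL' _ _ _ _ _ _ hrec.
  exact: Rop_reach.
move=> A B _ _; exact: dist.
Qed.


Lemma card_nonempty (T : finType) : #|[set X : {set T} | X != set0]| = 2 ^ #|T| - 1.
Proof.
rewrite (_ : [set X : {set T} | X != set0] = [set~ set0]); last by apply/setP => X; rewrite !inE.
by rewrite cardsC1 card_sets subn1.
Qed.

Lemma Phi_and_inj : {in setX [set X : {set 'I_m} | X != set0] [set Y : {set 'I_n} | Y != set0] &,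
  injective (fun p : {set 'I_m} * {set 'I_n} => Phi andb p.1 p.2)}.
Proof.
move=> [X Y] [X' Y']; rewrite !inE /= => /andP[hX hY] /andP[hX' hY'] E.
case/set0Pn: hX => x hx. case/set0Pn: hY => y hy.
have : (x, y) \in Phi andb X' Y' by rewrite -E inE /= hx hy.
rewrite inE /= => /andP[hx' hy'].
congr pair; apply/setP => i.
  have := congr1 (fun A : {set 'I_m * 'I_n} => (i, y) \in A) E. by rewrite /= !inE /= hy hy' !andbT.
have := congr1 (fun A : {set 'I_m * 'I_n} => (x, i) \in A) E. by rewrite /= !inE /= hx hx'.
Qed.

Lemma card_Rand : #|Rop andb| = (2 ^ m - 1) * (2 ^ n - 1) + 1.
Proof.
set D := setX [set X : {set 'I_m} | X != set0] [set Y : {set 'I_n} | Y != set0].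
have E : Rop andb = set0 |: [set Phi andb p.1 p.2 | p in D].
  apply/setP => A; rewrite inE. apply/imsetP/orP.
  - case=> [[X Y] _ ->] /=. case: (boolP ((X != set0) && (Y != set0))) => h.
      right. apply/imsetP. exists (X, Y) => //. by rewrite inE /= !inE.
    left. rewrite inE. apply/eqP/setP => q. rewrite !inE.
    move: h; rewrite negb_and !negbK => /orP[/eqP->|/eqP->]; by rewrite inE ?andbF.
  - case=> [|/imsetP [[X Y] _ ->]]; first rewrite inE => /eqP->.
      exists (set0, set0) => //. apply/setP => q; by rewrite !inE.
    by exists (X, Y).
have n0 : set0 \notin [set Phi andb p.1 p.2 | p in D].
  apply/imsetP => -[[X Y]]; rewrite inE /= !inE => /andP[hX hY] E0.
  case/set0Pn: hX => x hx. case/set0Pn: hY => y hy.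
  have : (x, y) \in Phi andb X Y by rewrite inE /= hx hy.
  by rewrite -E0 inE.
rewrite E cardsU1 n0 card_in_imset; last exact: Phi_and_inj.
by rewrite cardsX !card_nonempty !card_ord addnC.
Qed.

Lemma card_Ror : #|Rop orb| = #|Rop andb|.
Proof.
have key : forall X Y, Phi orb X Y = ~: Phi andb (~: X) (~: Y).
  move=> X Y; apply/setP => q; by rewrite !inE negb_and !negbK.
have E : Rop orb = [set ~: A | A in Rop andb].
  apply/setP => A; apply/imsetP/imsetP.
  - case=> [[X Y] _ ->] /=. exists (Phi andb (~: X) (~: Y)); last exact: key.
    apply/imsetP; by exists (~: X, ~: Y).
  - case=> B /imsetP [[X Y] _ ->] ->. exists (~: X, ~: Y); first by rewrite inE.
    by rewrite /= key !setCK.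
rewrite E card_imset //; exact: setC_inj.
Qed.

Lemma card_Rdiff : #|Rop (fun a b => a && ~~ b)| = #|Rop andb|.
Proof.
have -> : Rop (fun a b => a && ~~ b) = Rop andb; last done.
apply/setP => A; apply/imsetP/imsetP.
- case=> [[X Y] _ ->] /=. exists (X, ~: Y); first by rewrite inE.
  apply/setP => q; by rewrite !inE.
- case=> [[X Y] _ ->] /=. exists (X, ~: Y); first by rewrite inE.
  apply/setP => q; by rewrite !inE negbK.
Qed.

Lemma card_notin0 : #|[set X : {set 'I_m} | o0m \notin X]| = 2 ^ (m - 1).
Proof.
set A0 := [set X : {set 'I_m} | o0m \notin X].
have EC : ~: A0 = [set ~: X | X in A0].
  apply/setP => X; rewrite !inE negbK. apply/idP/imsetP.
  - move=> h. exists (~: X); last by rewrite setCK. by rewrite inE inE negbK.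
  - case=> Y; rewrite inE => hY ->. by rewrite inE.
have := cardsC A0. rewrite EC card_imset; last exact: setC_inj.
rewrite card_sets card_ord.
have e2 : 2 ^ m = 2 * 2 ^ (m - 1) by rewrite -expnS; congr (2 ^ _); lia.
rewrite e2. lia.
Qed.

Lemma card_Rxor : #|Rop (fun a b => a != b)| = 2 ^ (m + n - 1).
Proof.
set D := setX [set X : {set 'I_m} | o0m \notin X] [set: {set 'I_n}].
have E : Rop (fun a b => a != b) = [set Phi (fun a b => a != b) p.1 p.2 | p in D].
  apply/setP => A; apply/imsetP/imsetP.
  - case=> [[X Y] _ ->] /=. case: (boolP (o0m \in X)) => h.
      exists (~: X, ~: Y); first by rewrite inE /= !inE negbK h.
      apply/setP => q; rewrite !inE /=. by case: (q.1 \in X); case: (q.2 \in Y).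
    exists (X, Y) => //. by rewrite inE /= !inE h.
  - case=> [[X Y] _ ->]. by exists (X, Y).
have inj : {in D &, injective (fun p : {set 'I_m} * {set 'I_n} => Phi (fun a b => a != b) p.1 p.2)}.
  move=> [X Y] [X' Y']; rewrite !inE /= => /andP[hX _] /andP[hX' _] E0.
  have eY : Y = Y'.
    apply/setP => j. have := congr1 (fun A : {set 'I_m * 'I_n} => (o0m, j) \in A) E0.
    rewrite /Phi /= !inE /= (negbTE hX) (negbTE hX'). by case: (j \in Y); case: (j \in Y').
  rewrite -eY in E0 *. congr pair. apply/setP => i.
  have := congr1 (fun A : {set 'I_m * 'I_n} => (i, o0n) \in A) E0. rewrite /Phi /= !inE /=.
  by case: (i \in X); case: (i \in X'); case: (o0n \in Y).
rewrite E card_in_imset // cardsX card_notin0 cardsT card_sets card_ord -expnD.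
congr (2 ^ _); lia.
Qed.

End Concrete.

Unset Implicit Arguments.

Theorem theorem3 (m n : nat) (hm : 3 <= m) (hn : 3 <= n) :
  [/\ state_complexity (union_lang (rev_lang (K_lang m)) (rev_lang (L_lang n)))
        ((2 ^ m - 1) * (2 ^ n - 1) + 1),
      state_complexity (inter_lang (rev_lang (K_lang m)) (rev_lang (L_lang n)))
        ((2 ^ m - 1) * (2 ^ n - 1) + 1),
      state_complexity (diff_lang (rev_lang (K_lang m)) (rev_lang (L_lang n)))
        ((2 ^ m - 1) * (2 ^ n - 1) + 1)
    & state_complexity (symdiff_lang (rev_lang (K_lang m)) (rev_lang (L_lang n)))
        (2 ^ (m + n - 1))].
Proof.
have hK : forall w, rev_lang (K_lang m) w <-> XK m w 0 by [].
have hL : forall w, rev_lang (L_lang n) w <-> YL n w 0.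
  move=> w. rewrite /rev_lang /L_lang /YL /F2 /U_bac. by case: ifP.
split.
- rewrite -(card_Rand m n) -card_Ror. apply: (sc_op hm hn) => w.
  rewrite /union_lang. split.
    by case=> [/hK ->|/hL ->]; rewrite ?orbT.
  by case/orP => [/hK|/hL]; [left|right].
- rewrite -(card_Rand m n). apply: (sc_op hm hn) => w.
  rewrite /inter_lang. split.
    by case=> [/hK -> /hL ->].
  by case/andP => [/hK ? /hL ?].
- rewrite -(card_Rand m n) -card_Rdiff. apply: (sc_op hm hn) => w.
  rewrite /diff_lang. split.
    case=> [/hK -> h2] /=. apply/negP => /hL. exact: h2.
  case/andP => [/hK h1 h2]; split => // /hL h3. by rewrite h3 in h2.
- rewrite -(card_Rxor hm hn). apply: (sc_op hm hn) => w.
  rewrite /symdiff_lang. split.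
    case=> [[/hK h1 h2]|[/hL h1 h2]].
      have h3 : ~~ YL n w 0 by apply/negP => /hL.
      by rewrite h1 (negbTE h3).
    have h3 : ~~ XK m w 0 by apply/negP => /hK.
    by rewrite h1 (negbTE h3).
  case: (boolP (XK m w 0)) => h1; case: (boolP (YL n w 0)) => h2 //= _.
    left; split; [exact/hK|move/hL; by rewrite (negbTE h2)].
  right; split; [exact/hL|move/hK; by rewrite (negbTE h1)].
Qed.
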